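(* For any $q\in\mathbb{N}$, $s\in\mathbb{N}_0$ and $Y_s=\{y_i\}_{i=1}^s$ with $-1<y_s<\dots<y_1<1$, there exist a function $f\in\Delta^{(q)}(Y_s)$ and a set $A_p=\{\alpha_i\}_{i=1}^p$, $-1\le\alpha_p<\dots<\alpha_1\le1$, with $p\ge q+2$ and $A_p\cap Y_s=\emptyset$, such that for every $n\in\mathbb{N}_0$ there is no algebraic polynomial $P$ of degree $\le n$ with $P\in\Delta^{(q)}(Y_s)$ and $P(\alpha)=f(\alpha)$ for all $\alpha\in A_p$.
   Context: A function $g$ is $q$-monotone on an interval $J$, written $g\in\Delta^{(q)}(J)$, if all divided differences $[t_0,\dots,t_q;g]$ over $q+1$ distinct points of $J$ are nonnegative. With $y_0:=1$, $y_{s+1}:=-1$, $g\in\Delta^{(q)}(Y_s)$ iff $(-1)^ig\in\Delta^{(q)}([y_{i+1},y_i])$ for $0\le i\le s$; for $s=0$, $\Delta^{(q)}(Y_0)=\Delta^{(q)}([-1,1])$. *)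

(* Defs.v *)
From HB Require Import structures.
From mathcomp Require Import all_boot all_order all_algebra.
From mathcomp Require Import reals.
Set Implicit Arguments. Unset Strict Implicit. Unset Printing Implicit Defensive.
Import Order.TTheory GRing.Theory Num.Theory.
Local Open Scope ring_scope.

(* Divided difference [t_0,...,t_q; g] of g at the (distinct) points t_i,
   in the standard closed form  sum_i g(t_i) / prod_{j<>i} (t_i - t_j). *)
Definition divdiff (R : realType) (q : nat) (t : 'I_q.+1 -> R) (g : R -> R) : R :=
  \sum_(i < q.+1) g (t i) / \prod_(j < q.+1 | j != i) (t i - t j).

Definition qmonotone (R : realType) (q : nat) (g : R -> R) (a b : R) : Prop :=
  forall t : 'I_q.+1 -> R, injective t ->
    (forall i, a <= t i <= b) -> 0 <= divdiff t g.

Definition Yext (R : realType) (y : nat -> R) (s i : nat) : R :=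
  if i == 0%N then 1 else if i == s.+1 then -1 else y i.

Definition DeltaQ (R : realType) (q : nat) (y : nat -> R) (s : nat) (g : R -> R) : Prop :=
  forall i : nat, (i <= s)%N ->
    qmonotone q (fun x => (-1) ^+ i * g x) (Yext y s i.+1) (Yext y s i).

(* Main.v *)
Require Import Defs.
From HB Require Import structures.
From mathcomp Require Import all_boot all_order all_algebra.
From mathcomp Require Import reals.
From mathcomp Require Import zify.
Import Order.TTheory GRing.Theory Num.Theory.
Set Implicit Arguments. Unset Strict Implicit.
Local Open Scope ring_scope.

Definition phi (R : realType) (a r : R) := a + (1 - a) / r.

Lemma phi_lt (R : realType) (a r1 r2 : R) : a < 1 -> 0 < r1 -> 0 < r2 ->
  (phi a r1 < phi a r2) = (r2 < r1).
Proof. move=> ha h1 h2; rewrite /phi ltrD2l ltr_pM2l ?subr_gt0 // ltf_pV2 ?posrE //. Qed.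

Lemma phi_le (R : realType) (a r1 r2 : R) : a < 1 -> 0 < r1 -> 0 < r2 ->
  (phi a r1 <= phi a r2) = (r2 <= r1).
Proof. move=> ha h1 h2; rewrite /phi lerD2l ler_pM2l ?subr_gt0 // lef_pV2 ?posrE //. Qed.

Lemma phi_inj (R : realType) (a r1 r2 : R) : a < 1 -> 0 < r1 -> 0 < r2 ->
  phi a r1 = phi a r2 -> r1 = r2.
Proof.
move=> ha h1 h2 E; apply/eqP; by rewrite eq_le -(phi_le ha h1 h2) -(phi_le ha h2 h1) E lexx.
Qed.

Lemma phi1 (R : realType) (a : R) : phi a 1 = 1.
Proof. by rewrite /phi invr1 mulr1 addrC subrK. Qed.

Lemma phi_gt (R : realType) (a r : R) : a < 1 -> 0 < r -> a < phi a r.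
Proof. by move=> ha hr; rewrite /phi ltrDl divr_gt0 // subr_gt0. Qed.

Lemma divdiff_one (R : realType) (q : nat) (t : 'I_q.+1 -> R) (g : R -> R) :
  (forall m : 'I_q, g (t (lift ord0 m)) = 0) ->
  divdiff t g = g (t ord0) / \prod_(j < q) (t ord0 - t (lift ord0 j)).
Proof.
move=> H; rewrite /divdiff big_ord_recl [X in _ + X]big1 ?addr0.
  congr (_ * _^-1); rewrite big_mkcond big_ord_recl /= mul1r.
  by [].
by move=> m _; rewrite H mul0r.
Qed.

Lemma f_delta (R : realType) (q : nat) (y : nat -> R) (s : nat) :
  (forall i, (1 <= i)%N -> (i <= s.+1)%N -> Yext y s i < 1) ->
  DeltaQ q y s (fun x : R => if x == 1 then 1 else 0).
Proof.
move=> hYi i hi t tinj trange; rewrite /divdiff; apply: sumr_ge0 => m _ /=.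
case: eqP => [E|NE]; last by rewrite mulr0 mul0r.
have i0 : i = 0%N.
  case: i hi trange => [//|i] hi trange.
  have := trange m; rewrite E => /andP[_ h].
  have := hYi i.+1 isT (leqW hi); rewrite ltNge h //.
subst i; rewrite expr0 !mul1r invr_ge0; apply: prodr_ge0 => j _.
by rewrite E subr_ge0; have /andP[_ ->] := trange j.
Qed.

Lemma step (R : realType) (q : nat) (a r : R) (P : {poly R}) (h : nat -> nat) :
  a < 1 -> 2 < r -> r < 3 ->
  qmonotone q.+1 (fun x => (-1)^+0 * P.[x]) a 1 ->
  (forall j, (2 <= j)%N -> (j <= q.+3)%N -> P.[phi a j%:R] = 0) ->
  (forall m, (0 < m)%N -> (m <= q.+1)%N -> (2 <= h m <= q.+3)%N) ->
  (forall m1 m2, (0 < m1)%N -> (0 < m2)%N -> h m1 = h m2 -> m1 = m2) ->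
  0 <= P.[phi a r] / \prod_(j < q.+1) (phi a r - phi a (h j.+1)%:R).
Proof.
move=> ha r2 r3 hm hz hh hinj.
have rpos : 0 < r by apply: lt_trans r2.
have rnat : forall k : nat, r != k%:R.
  move=> k; case: (leqP k 2) => hk.
    by rewrite gt_eqF //; apply: le_lt_trans r2; rewrite (ler_nat R k 2).
  by rewrite lt_eqF //; apply: lt_le_trans r3 _; rewrite (ler_nat R 3 k).
pose u (m : 'I_q.+2) := if val m == 0%N then r else (h (val m))%:R.
have upos : forall m, 0 < u m.
  move=> m; rewrite /u; case: eqP => // /eqP m0.
  have hm0 : (0 < val m)%N by rewrite lt0n.
  have /andP[h2 _] := hh (val m) hm0 (ltn_ord m).
  by rewrite ltr0n; apply: leq_trans h2.
have uge1 : forall m, 1 <= u m.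
  move=> m; rewrite /u; case: eqP => [_|/eqP m0].
    by apply: le_trans (ltW r2); rewrite (ler_nat R 1 2).
  have hm0 : (0 < val m)%N by rewrite lt0n.
  have /andP[h2 _] := hh (val m) hm0 (ltn_ord m).
  by rewrite ler1n; apply: leq_trans h2.
have tinj : injective (fun m => phi a (u m)).
  move=> m1 m2 E; have := phi_inj ha (upos m1) (upos m2) E.
  apply: contra_eq => ne; rewrite /u.
  case: (val m1 =P 0%N) => e1; case: (val m2 =P 0%N) => e2.
  - by move: ne; apply: contra_neq => _; apply: val_inj; rewrite e1 e2.
  - by rewrite (rnat _).
  - by rewrite eq_sym (rnat _).
  - rewrite eqr_nat; move: ne; apply: contra_neq => /hinj E'.
    by apply: val_inj; apply: E'; rewrite lt0n; apply/eqP.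
have trange : forall m, a <= phi a (u m) <= 1.
  move=> m; apply/andP; split; first by apply/ltW/phi_gt.
  by rewrite -[X in _ <= X](phi1 a) phi_le.
have H := hm _ tinj trange.
rewrite divdiff_one in H; last first.
  move=> m; rewrite /u /= expr0 mul1r; apply: hz.
    by have /andP[] := hh m.+1 isT (ltn_ord m).
  by have /andP[] := hh m.+1 isT (ltn_ord m).
by rewrite /u /= expr0 mul1r in H.
Qed.

Lemma key (R : realType) (q : nat) (a r : R) (P : {poly R}) :
  a < 1 -> 2 < r -> r < 3 ->
  qmonotone q.+1 (fun x => (-1)^+0 * P.[x]) a 1 ->
  (forall j, (2 <= j)%N -> (j <= q.+3)%N -> P.[phi a j%:R] = 0) ->
  P.[phi a r] = 0.
Proof.
move=> ha r2 r3 hm hz.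
have rpos : 0 < r by apply: lt_trans r2.
have posk : forall k : nat, (3 <= k)%N -> 0 < phi a r - phi a k%:R.
  move=> k hk; rewrite subr_gt0 phi_lt // ?ltr0n; last by apply: leq_trans hk.
  by apply: lt_le_trans r3 _; rewrite (ler_nat R 3 k).
apply/eqP; rewrite eq_le; apply/andP; split.
  have := @step R q a r P (fun m => if m == 1%N then 2%N else m.+2) ha r2 r3 hm hz.
  have Hh : forall m, (0 < m)%N -> (m <= q.+1)%N ->
      (2 <= (if m == 1%N then 2%N else m.+2) <= q.+3)%N.
    by move=> m m0 mq; case: eqP => _; lia.
  have Hi : forall m1 m2, (0 < m1)%N -> (0 < m2)%N ->
      (if m1 == 1%N then 2%N else m1.+2) = (if m2 == 1%N then 2%N else m2.+2) -> m1 = m2.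
    move=> m1 m2 h1 h2; case: eqP => e1; case: eqP => e2; try lia.
  move=> /(_ Hh Hi); rewrite big_ord_recl /= ler_ndivlMr ?mul0r //.
  rewrite pmulr_llt0; first by rewrite subr_lt0 phi_lt.
  by apply: prodr_gt0 => j _; apply: posk.
have := @step R q a r P (fun m => m.+2) ha r2 r3 hm hz.
have Hh : forall m, (0 < m)%N -> (m <= q.+1)%N -> (2 <= m.+2 <= q.+3)%N.
  by move=> m m0 mq; lia.
have Hi : forall m1 m2, (0 < m1)%N -> (0 < m2)%N -> m1.+2 = m2.+2 -> m1 = m2.
  by move=> m1 m2 _ _ [].
move=> /(_ Hh Hi); rewrite ler_pdivlMr ?mul0r //.
by apply: prodr_gt0 => j _; apply: posk.
Qed.

Theorem lemma1p1 (R : realType) (q s : nat) (y : nat -> R) :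
  (1 <= q)%N ->
  (forall i : nat, (i <= s)%N -> Yext y s i.+1 < Yext y s i) ->
  exists (f : R -> R) (p : nat) (alpha : nat -> R),
    DeltaQ q y s f /\
    (q + 2 <= p)%N /\
    (-1 <= alpha p /\ alpha 1%N <= 1) /\
    (forall i : nat, (1 <= i < p)%N -> alpha i.+1 < alpha i) /\
    (forall i j : nat, (1 <= i <= p)%N -> (1 <= j <= s)%N -> alpha i <> y j) /\
    forall n : nat, ~ exists P : {poly R},
          (size P <= n.+1)%N /\
          DeltaQ q y s (fun x => P.[x]) /\
          forall i : nat, (1 <= i <= p)%N -> P.[alpha i] = f (alpha i).
Proof.
move=> hq hY.
case: q hq => [//|q] _.
have mono : forall k i, (i + k <= s.+1)%N -> Yext y s (i + k) <= Yext y s i.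
  elim=> [|k IH] i hik; first by rewrite addn0.
  rewrite addnS; apply: le_trans (IH i _); last lia.
  apply: ltW; apply: hY; lia.
have ha1 : Yext y s 1 < 1 by exact: (hY 0%N (leq0n s)).
have Es : Yext y s s.+1 = -1 by rewrite /Yext /= eqxx.
have ham1 : -1 <= Yext y s 1.
  by have := mono s 1%N (leqnn _); rewrite add1n Es.
have hyj : forall j, (1 <= j <= s)%N -> y j <= Yext y s 1.
  move=> j /andP[j1 js]; have h := mono (j - 1)%N 1%N; rewrite subnKC // in h.
  have Ej : Yext y s j = y j.
    rewrite /Yext; case: eqP => [e|_]; first lia.
    by case: eqP => [e|_]; first lia.
  by rewrite -Ej; apply: h; lia.
have hYi : forall i, (1 <= i)%N -> (i <= s.+1)%N -> Yext y s i < 1.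
  move=> i i1 iS; apply: le_lt_trans ha1; have h := mono (i - 1)%N 1%N.
  by rewrite subnKC // in h; apply: h; lia.
pose a := Yext y s 1.
exists (fun x => if x == 1 then 1 else 0), (q.+1 + 2)%N, (fun k => phi a k%:R).
split; first exact: f_delta.
split; first done.
split.
  split; first by apply: le_trans ham1 (ltW (phi_gt _ _)); rewrite // ltr0n.
  by have -> : (1%N)%:R = 1 :> R by []; rewrite phi1.
split.
  move=> i /andP[i1 ip]; rewrite phi_lt // ?ltr0n ?ltr_nat //; lia.
split.
  move=> i j /andP[i1 _] hj E; have := hyj j hj.
  by rewrite -E leNgt phi_gt // ltr0n.
move=> n [P [_ [hP hint]]].
have lt1 : forall j, (2 <= j)%N -> phi a j%:R < 1.
  move=> j j2; rewrite -[X in _ < X](phi1 a) phi_lt // ?ltr0n ?(ltr_nat R 1 j) //.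
  lia.
have hz : forall j, (2 <= j)%N -> (j <= q.+3)%N -> P.[phi a j%:R] = 0.
  move=> j j2 jq; rewrite hint; last by apply/andP; split; lia.
  by rewrite lt_eqF // lt1.
have h1 : P.[1] = 1.
  have := hint 1%N isT; have -> : (1%N)%:R = 1 :> R by [].
  by rewrite phi1 eqxx.
have hm : qmonotone q.+1 (fun x => (-1)^+0 * P.[x]) a 1 := hP 0%N (leq0n s).
have key' : forall r, 2 < r -> r < 3 -> P.[phi a r] = 0.
  by move=> r r2 r3; apply: (key ha1 r2 r3 hm hz).
have P0 : P = 0.
  apply/eqP; apply: contraT => nz.
  pose rs := [seq phi a (2 + (k.+2)%:R^-1) | k <- iota 0 (size P)].
  have : (size rs < size P)%N.
    apply: max_poly_roots nz _ _.
      apply/allP => x /mapP [k _ ->]; rewrite /root key' //.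
        by rewrite ltrDl invr_gt0 ltr0n.
      rewrite (_ : 3 = 2 + 1 :> R); last by rewrite -(natrD R 2 1).
      by rewrite ltrD2l invf_lt1 ?ltr0n // (ltr_nat R 1).
    rewrite map_inj_uniq ?iota_uniq // => k1 k2 E.
    have pk : forall k : nat, 0 < 2 + (k.+2)%:R^-1 :> R.
      by move=> k; rewrite addr_gt0 ?invr_gt0 ?ltr0n.
    have := phi_inj ha1 (pk k1) (pk k2) E.
    by move/addrI/invr_inj/eqP; rewrite eqr_nat eqSS eqSS => /eqP.
  by rewrite size_map size_iota ltnn.
by move: h1; rewrite P0 horner0 => /eqP; rewrite eq_sym oner_eq0.
Qed.
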